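(* Let $n\ge1$ and let $(P_n,A_n,\lambda)$ be the Gelfand–Tsetlin marked poset with marking $\lambda_0\ge\lambda_1\ge\cdots\ge\lambda_n$. Then: (1) if $\lambda_0>\lambda_1>\cdots>\lambda_n$, then $(P_n,A_n,\lambda)$ is a regular marked poset; (2) $\operatorname{St}(P_n)=\{p_{i,j}: 1\le i<j<n\}$.
   Context: $P_n$ is the poset on $\{p_{i,j}: 0\le i\le j\le n\}$ whose cover relations are exactly $p_{i-1,j}\to p_{i,j}\to p_{i-1,j-1}$ for $1\le i\le j\le n$, where $q\to p$ means $p$ covers $q$ (i.e. $q\prec p$ with nothing strictly between). $A_n=\{p_{0,0},p_{0,1},\dots,p_{0,n}\}$, and the marking $\lambda:A_n\to\mathbb{Z}_{\ge0}$ is $\lambda(p_{0,k})=\lambda_k$. For $p\in P$, let $p\to$ denote the set of elements covering $p$ and $\rightsquigarrow p$ the set of maximal chains ending in $p$, i.e. chains $r_0\to\cdots\to r_k=p$ with $r_0$ minimal. $p$ is a star element if $|p\to|\ge2$ and $|\rightsquigarrow p|\ge2$; $\operatorname{St}(P)$ is the set of star elements. A marked poset $(P,A,\lambda)$ ($A$ containing all extremal elements, $\lambda:A\to\mathbb{Z}_{\ge0}$) is regular if: (1) there are no $a,b\in A$ with $a\to b$; (2) $\lambda_a\ne\lambda_b$ for $a\ne b\in A$; (3) if $a\in A$, $x\in P\setminus A$, $a\to x$, there is no $b\in A$ with $b\prec x$ and $\lambda_a<\lambda_b$; (4) if $a\in A$, $x\in P\setminus A$, $x\to a$, there is no $b\in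 A$ with $x\prec b$ and $\lambda_b<\lambda_a$. *)

(* Defs.v *)
From mathcomp Require Import all_boot.
Set Implicit Arguments. Unset Strict Implicit. Unset Printing Implicit Defensive.

Definition GT (n : nat) := {x : 'I_n.+1 * 'I_n.+1 | (x.1 <= x.2)%N}.

Section GTPoset.
Variable n : nat.

Definition gi (p : GT n) : nat := (val p).1.
Definition gj (p : GT n) : nat := (val p).2.

(* generating edges: gt_edge q p  means  q -> p  in the paper, i.e.
   q = p_{i-1,j}, p = p_{i,j}   or   q = p_{i,j}, p = p_{i-1,j-1}. *)
Definition gt_edge (q p : GT n) : bool :=
  ((gi p == (gi q).+1) && (gj p == gj q)) ||
  ((gi q == (gi p).+1) && (gj q == (gj p).+1)).

Definition gt_le (q p : GT n) : bool := connect gt_edge q p.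
Definition gt_lt (q p : GT n) : bool := (q != p) && gt_le q p.

Definition covers (q p : GT n) : bool :=
  gt_lt q p && ~~ [exists r, gt_lt q r && gt_lt r p].

Definition minimalb (p : GT n) : bool := [forall q, ~~ gt_lt q p].
Definition maximalb (p : GT n) : bool := [forall q, ~~ gt_lt p q].

Definition up_covers (p : GT n) : {set GT n} := [set q | covers p q].

Definition maxchain_to (p : GT n) (s : seq (GT n)) : bool :=
  if s is r0 :: t then [&& minimalb r0, path covers r0 t & last r0 t == p]
  else false.

(* star element: |p ->| >= 2 and |~> p| >= 2 *)
Definition star (p : GT n) : Prop :=
  (2 <= #|up_covers p|)%N /\
  exists s1 s2, [/\ s1 != s2, maxchain_to p s1 & maxchain_to p s2].

Definition A_n : pred (GT n) := fun p => gi p == 0%N.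
Definition gt_mark (lam : nat -> nat) (p : GT n) : nat := lam (gj p).

(* regular marked poset (P_n, A, mk); mk is only relevant on A *)
Definition regular (A : pred (GT n)) (mk : GT n -> nat) : Prop :=
  [/\
      (forall x, minimalb x || maximalb x -> x \in A),
      (forall a b, a \in A -> b \in A -> ~~ covers a b),
      (forall a b, a \in A -> b \in A -> a != b -> mk a != mk b),
      (forall a x b, a \in A -> x \notin A -> covers a x ->
         b \in A -> gt_lt b x -> ~~ (mk a < mk b)%N) &
      (forall a x b, a \in A -> x \notin A -> covers x a ->
         b \in A -> gt_lt x b -> ~~ (mk b < mk a)%N)].

End GTPoset.

(* Main.v *)
Require Import Defs.
From mathcomp Require Import all_boot.
From mathcomp Require Import zify.
Set Implicit Arguments. Unset Strict Implicit. Unset Printing Implicit Defensive.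

Definition ht (n : nat) (p : GT n) : nat := gi p + 2 * (n - gj p).

Lemma giP (n : nat) (p : GT n) : gi p <= gj p.
Proof. exact: (valP p). Qed.

Lemma gjP (n : nat) (p : GT n) : gj p <= n.
Proof. have := ltn_ord (val p).2. rewrite /gj. lia. Qed.

Lemma GT_eq (n : nat) (p q : GT n) : gi p = gi q -> gj p = gj q -> p = q.
Proof.
case: p => [[a b] hp]; case: q => [[c d] hq]; rewrite /gi /gj /= => e1 e2.
apply: val_inj => /=. congr pair; exact: val_inj.
Qed.

Lemma exGT (n i j : nat) : i <= j -> j <= n -> {p : GT n | gi p = i /\ gj p = j}.
Proof.
move=> hij hjn.
have hi : i < n.+1 by lia.
have hj : j < n.+1 by lia.
by exists (exist _ (Ordinal hi, Ordinal hj) hij).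
Qed.

Lemma edge_ht (n : nat) (q p : GT n) : gt_edge q p -> ht p = (ht q).+1 /\ gj p <= gj q.
Proof.
move=> he; have a1 := gjP p; have a2 := gjP q; have a3 := giP p; have a4 := giP q.
move: he; rewrite /ht; case/orP => /andP[/eqP e1 /eqP e2]; rewrite e1 e2 in a1 a2 a3 a4 *; lia.
Qed.

Lemma path_ht (n : nat) (s : seq (GT n)) (q : GT n) : path (@gt_edge n) q s ->
  ht (last q s) = ht q + size s /\ gj (last q s) <= gj q.
Proof.
elim: s q => [|r s IH] q /=; first by rewrite addn0.
case/andP => /edge_ht [h1 h2] /IH [h3 h4]; split; lia.
Qed.

Lemma lt_ht (n : nat) (q p : GT n) : gt_lt q p -> ht q < ht p /\ gj p <= gj q.
Proof.
case/andP => hne /connectP [s hs hp]; subst p.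
have [h1 h2] := path_ht hs; split => //.
case: s hs hne h1 {h2} => [|r s] /=.
  by move=> _; rewrite eqxx.
move=> _ _ ->; lia.
Qed.

Lemma covers_edge (n : nat) (q p : GT n) : covers q p = gt_edge q p.
Proof.
apply/idP/idP.
- case/andP => /andP [hne /connectP [s hs ep]] /existsPn hno.
  case: s hs ep hne => [|r s] /=; first by move=> _ ->; rewrite eqxx.
  case/andP => he hs ep hne.
  case: s hs ep => [|r' s'] hs ep; first by rewrite ep.
  have [h1 _] := edge_ht he.
  have [h3 _] := path_ht hs.
  have := hno r; move/negP; case; apply/andP; split; apply/andP; split.
  + apply/eqP => e; rewrite e in h1; lia.
  + exact: connect1.
  + apply/eqP => e; rewrite -ep -e in h3; simpl in h3; lia.
  + by rewrite ep; apply/connectP; exists (r' :: s').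
- move=> he; have [h1 _] := edge_ht he.
  apply/andP; split.
  + apply/andP; split; last exact: connect1.
    apply/eqP => e; rewrite e in h1; lia.
  + apply/existsPn => r; apply/negP => /andP [/lt_ht [a _] /lt_ht [b _]]; lia.
Qed.

Lemma minimal_gi (n : nat) (x : GT n) : minimalb x -> gi x = 0.
Proof.
move/forallP => hm; case E: (gi x) => [|i] //.
have [q [q1 q2]] := @exGT n i (gj x) ltac:(have := giP x; lia) (gjP x).
have := hm q; rewrite /gt_lt /gt_le.
have he : gt_edge q x by rewrite /gt_edge q1 q2 E !eqxx.
have [h1 _] := edge_ht he.
rewrite connect1 // andbT; move/negP; case; apply/eqP => e; rewrite e in h1; lia.
Qed.

Lemma maximal_gi (n : nat) (x : GT n) : maximalb x -> gi x = 0.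
Proof.
move/forallP => hm; case E: (gi x) => [|i] //.
have [q [q1 q2]] := @exGT n i (gj x).-1 ltac:(have := giP x; lia) ltac:(have := gjP x; lia).
have := hm q; rewrite /gt_lt /gt_le.
have he : gt_edge x q.
  rewrite /gt_edge q1 q2 E eqxx /=; apply/eqP; have := giP x; lia.
have [h1 _] := edge_ht he.
rewrite connect1 // andbT; move/negP; case; apply/eqP => e; rewrite e in h1; lia.
Qed.

Lemma ht0_minimal (n : nat) (x : GT n) : ht x = 0 -> minimalb x.
Proof.
move=> h0; apply/forallP => q; apply/negP => /lt_ht [a _]; lia.
Qed.

Lemma lam_weak (n : nat) (lam : nat -> nat)
  (hlam : forall k, (k < n)%N -> (lam k.+1 <= lam k)%N) j k :
  j <= k -> k <= n -> lam k <= lam j.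
Proof.
elim: k => [|k IH] hjk hkn; first by have -> : j = 0 by lia.
case: (ltnP j k.+1) => h.
- apply: leq_trans (hlam k hkn) (IH _ _); lia.
- by have -> : j = k.+1 by lia.
Qed.

Lemma lam_strict (n : nat) (lam : nat -> nat)
  (hlam : forall k, (k < n)%N -> (lam k.+1 < lam k)%N) j k :
  j < k -> k <= n -> lam k < lam j.
Proof.
elim: k => [|k IH] hjk hkn; first by [].
case: (ltnP j k) => h.
- apply: ltn_trans (hlam k hkn) (IH _ _); lia.
- have -> : j = k by lia. exact: hlam.
Qed.

Lemma chain_ex (n : nat) k (x : GT n) : ht x = k -> exists s, maxchain_to x s.
Proof.
elim: k x => [|k IH] x hx.
  by exists [:: x]; rewrite /= ht0_minimal // eqxx.
have [y [he hy]] : exists y, gt_edge y x /\ ht y = k.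
  have a1 := giP x; have a2 := gjP x.
  case E: (gi x) => [|i].
  - have [y [y1 y2]] := @exGT n 1 (gj x).+1 ltac:(lia) ltac:(rewrite /ht E in hx; lia).
    have he : gt_edge y x by rewrite /gt_edge y1 y2 E !eqxx orbT.
    exists y; split => //; have [h1 _] := edge_ht he; lia.
  - have [y [y1 y2]] := @exGT n i (gj x) ltac:(lia) a2.
    have he : gt_edge y x by rewrite /gt_edge y1 y2 E !eqxx.
    exists y; split => //; have [h1 _] := edge_ht he; lia.
have [[|r0 t] //=] := IH y hy.
case/and3P => hm hp /eqP hl.
exists (r0 :: rcons t x) => /=.
by rewrite hm rcons_path hp hl covers_edge he last_rcons eqxx.
Qed.

Lemma chain_uniq (n : nat) k (x : GT n) : gi x = k -> gj x = n ->
  forall s1 s2, maxchain_to x s1 -> maxchain_to x s2 -> s1 = s2.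
Proof.
have key : forall (x : GT n) r0 t, gj x = n -> maxchain_to x (r0 :: t) ->
    (t = [::] /\ r0 = x /\ gi x = 0) \/
    exists t' y, [/\ t = rcons t' y, maxchain_to (last r0 t') (r0 :: t'),
                     gi x = (gi (last r0 t')).+1 & gj (last r0 t') = n].
  move=> x0 r0 t hj /= /and3P [hm hp /eqP hl].
  case/lastP: t hp hl => [|t' y] /=.
    move=> _ e; left; split => //; split => //; rewrite -e; exact: minimal_gi.
  rewrite rcons_path last_rcons => /andP [hp hc] e; subst y; right.
  have gg := gjP (last r0 t').
  have [f1 f2] : gi x0 = (gi (last r0 t')).+1 /\ gj (last r0 t') = n.
    move: hc; rewrite covers_edge /gt_edge hj.
    case/orP => /andP [/eqP a /eqP b]; lia.
  exists t', x0; split => //; by rewrite /= hm hp eqxx.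
elim: k x => [|k IH] x hi hj [|r1 t1] [|r2 t2] //= c1 c2.
- have c1' : maxchain_to x (r1 :: t1) by [].
  have c2' : maxchain_to x (r2 :: t2) by [].
  case: (key _ _ _ hj c1') => [[-> [-> _]]|[t' [y [_ _ e _]]]]; last by rewrite hi in e.
  case: (key _ _ _ hj c2') => [[-> [-> _]]|[t'' [y' [_ _ e _]]]]; last by rewrite hi in e.
  done.
- have c1' : maxchain_to x (r1 :: t1) by [].
  have c2' : maxchain_to x (r2 :: t2) by [].
  case: (key _ _ _ hj c1') => [[_ [_ e]]|[t1' [y1 [E1 m1 e1 j1]]]]; first by rewrite hi in e.
  case: (key _ _ _ hj c2') => [[_ [_ e]]|[t2' [y2 [E2 m2 e2 j2]]]]; first by rewrite hi in e.
  have eq12 : last r1 t1' = last r2 t2' by apply: GT_eq; lia.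
  rewrite eq12 in m1.
  have := IH (last r2 t2') ltac:(lia) j2 _ _ m1 m2.
  case => a b.
  move: c1 c2 => /and3P [_ _ /eqP l1] /and3P [_ _ /eqP l2].
  rewrite E1 E2 !last_rcons in l1 l2 *.
  by rewrite a b l1 l2.
Qed.

Lemma edge_cases (n : nat) (q p : GT n) : gt_edge q p ->
  (gi p = (gi q).+1 /\ gj p = gj q) \/ (gi q = (gi p).+1 /\ gj q = (gj p).+1).
Proof. by case/orP => /andP [/eqP a /eqP b]; [left|right]. Qed.

Lemma extend (n : nat) (y x : GT n) s : gt_edge y x -> maxchain_to y s ->
  maxchain_to x (rcons s x).
Proof.
case: s => [|r0 t] //= he /and3P [hm hp /eqP hl].
by rewrite hm rcons_path hp hl covers_edge he last_rcons eqxx.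
Qed.

Lemma chain_last (n : nat) (y : GT n) s : maxchain_to y s -> last y s = y.
Proof. by case: s => [|r0 t] //= /and3P [_ _ /eqP]. Qed.

Theorem lemma6p2 (n : nat) (hn : (1 <= n)%N) (lam : nat -> nat)
  (hlam : forall k, (k < n)%N -> (lam k.+1 <= lam k)%N) :
  ((forall k, (k < n)%N -> (lam k.+1 < lam k)%N) ->
     regular (@A_n n) (gt_mark (n:=n) lam)) /\
  (forall p : GT n, star p <-> [/\ (1 <= gi p)%N, (gi p < gj p)%N & (gj p < n)%N]).
Proof.
split.
  move=> hs; split.
  - move=> x /orP [/minimal_gi | /maximal_gi] h; by rewrite unfold_in /A_n h.
  - move=> a b; rewrite !unfold_in /A_n => /eqP ha /eqP hb.
    rewrite covers_edge; apply/negP => /edge_cases; lia.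
  - move=> a b; rewrite !unfold_in /A_n /gt_mark => /eqP ha /eqP hb hab.
    have ja := gjP a; have jb := gjP b.
    case: (ltngtP (gj a) (gj b)) => h.
    + have := lam_strict hs h jb; lia.
    + have := lam_strict hs h ja; lia.
    + by rewrite (GT_eq (etrans ha (esym hb)) h) eqxx in hab.
  - move=> a x b; rewrite !unfold_in /A_n /gt_mark => /eqP ha hx.
    rewrite covers_edge => /edge_cases hc /eqP hb /lt_ht [_ hj].
    rewrite -leqNgt; apply: (lam_weak hlam); last exact: gjP.
    case: hc; lia.
  - move=> a x b; rewrite !unfold_in /A_n /gt_mark => /eqP ha hx.
    rewrite covers_edge => /edge_cases hc /eqP hb /lt_ht [hh _].
    rewrite -leqNgt; apply: (lam_weak hlam); last exact: gjP.
    move: hh; rewrite /ht; have := gjP a; have := gjP b; case: hc; lia.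
move=> p; split.
- case => /card_gt1P [q1 [q2 [h1 h2 hne]]] [s1 [s2 [sne c1 c2]]].
  rewrite !inE !covers_edge in h1 h2.
  have g1 := giP q1; have g2 := giP q2.
  have [a b] : 1 <= gi p /\ gi p < gj p.
    case: (edge_cases h1) => [[x1 y1]|[x1 y1]];
    case: (edge_cases h2) => [[x2 y2]|[x2 y2]]; try lia.
    + by rewrite (@GT_eq n q1 q2) ?eqxx in hne; lia.
    + by rewrite (@GT_eq n q1 q2) ?eqxx in hne; lia.
  split => //.
  have := gjP p; rewrite leq_eqVlt => /orP [/eqP e|] //.
  by rewrite (chain_uniq (erefl (gi p)) e c1 c2) eqxx in sne.
- case => a b c; split.
  + apply/card_gt1P.
    have [q1 [x1 y1]] := @exGT n (gi p).+1 (gj p) b (gjP p).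
    have [q2 [x2 y2]] := @exGT n (gi p).-1 (gj p).-1 ltac:(lia) ltac:(have := gjP p; lia).
    exists q1, q2; rewrite !inE !covers_edge /gt_edge x1 y1 x2 y2 !eqxx /=.
    split.
    * by [].
    * apply/orP; right; apply/andP; split; apply/eqP; lia.
    * apply/eqP => e; rewrite e x2 in x1; lia.
  + have [y1 [x1 z1]] := @exGT n (gi p).-1 (gj p) ltac:(lia) (gjP p).
    have [y2 [x2 z2]] := @exGT n (gi p).+1 (gj p).+1 ltac:(lia) c.
    have e1 : gt_edge y1 p by rewrite /gt_edge x1 z1 eqxx andbT; apply/orP; left; apply/eqP; lia.
    have e2 : gt_edge y2 p by rewrite /gt_edge x2 z2 !eqxx orbT.
    have [s1 c1] := chain_ex (erefl (ht y1)).
    have [s2 c2] := chain_ex (erefl (ht y2)).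
    exists (rcons s1 p), (rcons s2 p); split; [|exact: extend e1 c1|exact: extend e2 c2].
    apply/eqP => E; have e : s1 = s2 by case: (rcons_inj E).
    have l1 := chain_last c1; have l2 := chain_last c2.
    subst s1.
    have : y1 = y2.
      by case: s2 c1 c2 {l1 l2 E} => [|r t] //= /and3P [_ _ /eqP <-] /and3P [_ _ /eqP <-].
    move=> ey; rewrite ey x2 in x1; lia.
Qed.
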